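(* Consider the deterministic crowd-learning system described in the context, with $N\ge 2$ PoIs and reward rate $\beta>0$. Let $\overline{\Delta}_{\max}^{(\beta)}$ be the average maximum age when every user acts selfishly, and $\overline{\Delta}_{\max}^{(\mathrm{OPT})}$ the minimum average maximum age over all admissible assignment policies. Then the price of anarchy $$\rho(\beta)\triangleq 1-\frac{\overline{\Delta}_{\max}^{(\mathrm{OPT})}}{\overline{\Delta}_{\max}^{(\beta)}}$$ satisfies $$\rho(\beta)\le \frac{p_{\max}}{(N-1)\beta+p_{\max}}=O(1/\beta).$$
   Context: Deterministic crowd-learning model. There are $N\ge 2$ points of interest (PoIs), indexed $n=1,\dots,N$, and time is slotted, $t=0,1,2,\dots$. Each PoI $n$ has a price $p_n[t]\in[p_{\min},p_{\max}]$, where $0<p_{\min}\le p_{\max}$; the price sequence may be arbitrary. The service provider keeps a recorded price $r_n[t]$ for each PoI, with $r_n[0]\in[p_{\min},p_{\max}]$. Each PoI also has an age $\Delta_n[t]\in\{0,1,2,\dots\}$, with finite initial values $\Delta_n[0]$. In every slot exactly one user arrives. That user selects a single PoI, and we write $S_n[t]=1$ if PoI $n$ is selected in slot $t$ and $S_n[t]=0$ otherwise, so that $\sum_n S_n[t]=1$. The selected PoI's record is refreshed: $r_n[t+1]=p_n[t]$ if $S_n[t]=1$, and $r_n[t+1]=r_n[t]$ otherwise. Ages evolve as $$\Delta_n[t+1]=(\Delta_n[t]+1)(1-S_n[t]).$$ Selfish behavior with reward rate $\beta>0$: the user in slot $t$ selects $$n^*[t]\in\arg\max_{n}\big(\beta\Delta_n[t]-r_n[t]\big),$$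 with ties broken arbitrarily. An admissible policy is any rule that, in each slot, chooses the single PoI for that slot's user based on the past history. The average maximum age of a policy is $$\overline{\Delta}_{\max}=\limsup_{T\to\infty}\frac1T\sum_{t=0}^{T-1}\mathbb{E}\Big[\max_n\Delta_n[t]\Big].$$ $\overline{\Delta}_{\max}^{(\beta)}$ denotes this quantity under selfish behavior, and $\overline{\Delta}_{\max}^{(\mathrm{OPT})}$ its infimum over admissible policies. *)

(* Defs.v *)
From Stdlib Require Import Reals Lra Lia Arith List.
Open Scope R_scope.

(* PoIs are indexed by n < N (0-based); a selection sequence sel : nat -> nat
   gives the PoI chosen in slot t (must satisfy sel t < N). *)

(* Age dynamics: Delta_n[t+1] = (Delta_n[t]+1)(1 - S_n[t]). *)
Fixpoint age (D0 : nat -> nat) (sel : nat -> nat) (t : nat) (n : nat) : nat :=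
  match t with
  | O => D0 n
  | S t' => if Nat.eqb (sel t') n then 0%nat else S (age D0 sel t' n)
  end.

(* Recorded prices: r_n[t+1] = p_n[t] if selected, r_n[t] otherwise. *)
Fixpoint recp (r0 : nat -> R) (p : nat -> nat -> R) (sel : nat -> nat)
  (t : nat) (n : nat) : R :=
  match t with
  | O => r0 n
  | S t' => if Nat.eqb (sel t') n then p t' n else recp r0 p sel t' n
  end.

Definition max_age (N : nat) (D0 : nat -> nat) (sel : nat -> nat) (t : nat) : nat :=
  fold_right Nat.max 0%nat (map (age D0 sel t) (seq 0 N)).

Fixpoint rsum (u : nat -> R) (T : nat) : R :=
  match T with
  | O => 0
  | S T' => rsum u T' + u T'
  end.

(* (1/T) sum_{t=0}^{T-1} max_n Delta_n[t]  (deterministic: no expectation) *)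
Definition avg_max_age (N : nat) (D0 : nat -> nat) (sel : nat -> nat) (T : nat) : R :=
  rsum (fun t => INR (max_age N D0 sel t)) T / INR T.

Definition is_limsup (u : nat -> R) (L : R) : Prop :=
  forall eps : R, eps > 0 ->
    (exists M : nat, forall n : nat, (n >= M)%nat -> u n <= L + eps) /\
    (forall M : nat, exists n : nat, (n >= M)%nat /\ u n >= L - eps).

Definition is_inf (S : R -> Prop) (L : R) : Prop :=
  (forall x, S x -> L <= x) /\ (forall y, (forall x, S x -> y <= x) -> y <= L).

Definition admissible (N : nat) (sel : nat -> nat) : Prop :=
  forall t : nat, (sel t < N)%nat.

(* sel is a selfish trajectory: in every slot the chosen PoI maximizes
   beta*Delta_n[t] - r_n[t] (ties broken arbitrarily). *)
Definition selfish (N : nat) (beta : R) (D0 : nat -> nat) (r0 : nat -> R)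
  (p : nat -> nat -> R) (sel : nat -> nat) : Prop :=
  admissible N sel /\
  forall t m : nat, (m < N)%nat ->
    beta * INR (age D0 sel t m) - recp r0 p sel t m
      <= beta * INR (age D0 sel t (sel t)) - recp r0 p sel t (sel t).

Definition achievable (N : nat) (D0 : nat -> nat) (L : R) : Prop :=
  exists sel, admissible N sel /\ is_limsup (avg_max_age N D0 sel) L.

(* Main.v *)
Require Import Defs.
From Stdlib Require Import Reals Lra Lia Arith List Classical.
From Coquelicot Require Import Coquelicot.
Open Scope R_scope.

Lemma div_le (x y T : R) : 0 < T -> x <= y * T -> x / T <= y.
Proof.
  intros HT H. unfold Rdiv.
  replace y with ((y*T) * / T) by (field; lra).
  apply Rmult_le_compat_r; [left; apply Rinv_0_lt_compat; lra| exact H].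
Qed.

Lemma le_div (x y T : R) : 0 < T -> y * T <= x -> y <= x / T.
Proof.
  intros HT H. unfold Rdiv.
  replace y with ((y*T) * / T) by (field; lra).
  apply Rmult_le_compat_r; [left; apply Rinv_0_lt_compat; lra| exact H].
Qed.

Lemma age_noselect D0 sel n s d :
  (forall u, (s <= u < s + d)%nat -> sel u <> n) ->
  age D0 sel (s + d) n = (age D0 sel s n + d)%nat.
Proof.
  induction d; intros H.
  - rewrite Nat.add_0_r; lia.
  - replace (s + S d)%nat with (S (s + d)) by lia. cbn [age].
    destruct (Nat.eqb_spec (sel (s+d)%nat) n) as [E|E].
    + exfalso; apply (H (s+d)%nat); [lia|exact E].
    + rewrite IHd; [lia|]. intros u Hu; apply H; lia.
Qed.

Lemma age_after_select D0 sel n s t :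
  sel s = n -> (s < t)%nat -> (age D0 sel t n <= t - s - 1)%nat.
Proof.
  intros Hs. induction t; intros Ht; [lia|]. cbn [age].
  destruct (Nat.eqb_spec (sel t) n) as [E|E]; [lia|].
  assert (s <> t) by (intro; subst; contradiction).
  specialize (IHt ltac:(lia)). lia.
Qed.

Lemma recp_bound N pmin pmax (p : nat -> nat -> R) r0 sel :
  (forall t n, (n < N)%nat -> pmin <= p t n <= pmax) ->
  (forall n, (n < N)%nat -> pmin <= r0 n <= pmax) ->
  forall t n, (n < N)%nat -> pmin <= recp r0 p sel t n <= pmax.
Proof.
  intros Hp Hr t. induction t; intros n Hn; simpl; auto.
  destruct (Nat.eqb (sel t) n); auto.
Qed.

Lemma fold_max_ge (f : nat -> nat) l x :
  In x l -> (f x <= fold_right Nat.max 0 (map f l))%nat.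
Proof.
  induction l; simpl; [tauto|]. intros [->|H]; [lia|]. specialize (IHl H); lia.
Qed.

Lemma fold_max_le (f : nat -> nat) l B :
  (forall x, In x l -> (f x <= B)%nat) -> (fold_right Nat.max 0 (map f l) <= B)%nat.
Proof.
  induction l; simpl; intros H; [lia|].
  assert (f a <= B)%nat by auto. assert (fold_right Nat.max 0 (map f l) <= B)%nat by auto. lia.
Qed.

Lemma max_age_ge N D0 sel t n : (n < N)%nat -> (age D0 sel t n <= max_age N D0 sel t)%nat.
Proof. intros; unfold max_age; apply fold_max_ge; apply in_seq; lia. Qed.

Lemma max_age_le N D0 sel t B : (forall n, (n < N)%nat -> (age D0 sel t n <= B)%nat) ->
  (max_age N D0 sel t <= B)%nat.
Proof. intros H; unfold max_age; apply fold_max_le; intros x Hx; apply in_seq in Hx; apply H; lia. Qed.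

Lemma pigeon N L : length L = (N - 1)%nat -> (1 <= N)%nat -> exists n, (n < N)%nat /\ ~ In n L.
Proof.
  intros HL HN. destruct (classic (exists n, (n < N)%nat /\ ~ In n L)) as [H|H]; [exact H|].
  exfalso. assert (incl (seq 0 N) L).
  { intros x Hx. apply in_seq in Hx. destruct (classic (In x L)); auto. exfalso; apply H; exists x; split; [lia|auto]. }
  pose proof (NoDup_incl_length (seq_NoDup N 0) H0). rewrite length_seq in H1. lia.
Qed.

Lemma lower_max_age N D0 sel : admissible N sel -> (1 <= N)%nat ->
  forall t, (N - 1 <= t)%nat -> (N - 1 <= max_age N D0 sel t)%nat.
Proof.
  intros Had HN t Ht.
  destruct (pigeon N (map sel (seq (t - (N-1)) (N-1))) ltac:(rewrite length_map, length_seq; reflexivity) HN)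
    as [n [Hn Hnin]].
  eapply Nat.le_trans; [|apply (max_age_ge N D0 sel t n Hn)].
  replace t with ((t - (N-1)) + (N-1))%nat at 1 by lia.
  rewrite age_noselect; [lia|].
  intros u Hu E. apply Hnin. apply in_map_iff. exists u; split; auto. apply in_seq; lia.
Qed.

Lemma floor_nat (x beta : R) : 0 < beta -> 0 <= x ->
  exists k : nat, INR k * beta <= x < INR (S k) * beta.
Proof.
  intros Hb Hx.
  assert (Hind : forall M : nat, forall x, 0 <= x < INR (S M) * beta ->
    exists k : nat, INR k * beta <= x < INR (S k) * beta).
  { induction M; intros y Hy.
    - exists 0%nat. simpl in *. lra.
    - destruct (Rlt_le_dec y (INR (S M) * beta)).
      + apply IHM; lra.
      + exists (S M). lra. }
  destruct (INR_archimed beta x Hb) as [M HM].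
  apply (Hind M). split; [lra|]. rewrite S_INR. nra.
Qed.

Lemma nodup_map_seq (f : nat -> nat) a len :
  (forall i j, (a <= i)%nat -> (i < j)%nat -> (j < a + len)%nat -> f i <> f j) ->
  NoDup (map f (seq a len)).
Proof.
  revert a. induction len; intros a H; simpl; constructor.
  - intros Hin. apply in_map_iff in Hin. destruct Hin as [j [Ej Hj]]. apply in_seq in Hj.
    apply (H a j); lia.
  - apply IHlen. intros i j ? ? ?. apply H; lia.
Qed.

Lemma selfish_upper N pmin pmax beta (p : nat -> nat -> R) r0 D0 sel k :
  0 < beta ->
  (forall t n, (n < N)%nat -> pmin <= p t n <= pmax) ->
  (forall n, (n < N)%nat -> pmin <= r0 n <= pmax) ->
  selfish N beta D0 r0 p sel ->
  pmax - pmin < INR (S k) * beta ->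
  forall t m, (N + k <= t)%nat -> (m < N)%nat -> (age D0 sel t m <= N - 1 + k)%nat.
Proof.
  intros Hb Hp Hr [Had Hself] Hk t m Ht Hm.
  destruct (Nat.le_gt_cases (age D0 sel t m) (N - 1 + k)) as [|Hbig]; [assumption|exfalso].
  set (t0 := (t - (N + k))%nat).
  assert (Hns : forall u, (t0 <= u < t)%nat -> sel u <> m).
  { intros u Hu E. pose proof (age_after_select D0 sel m u t E ltac:(lia)). unfold t0 in *. lia. }
  assert (Hdist : forall i j, (t0 + k <= i)%nat -> (i < j)%nat -> (j < t0 + k + N)%nat -> sel i <> sel j).
  { intros i j Hi Hij Hj E.
    set (n := sel j).
    assert (Hn : (n < N)%nat) by apply Had.
    pose proof (age_after_select D0 sel n i j E Hij) as Han.
    assert (Ham : (j - t0 <= age D0 sel j m)%nat).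
    { replace j with (t0 + (j - t0))%nat at 2 by lia. rewrite age_noselect; [lia|].
      intros u Hu; apply Hns; unfold t0 in *; lia. }
    assert (Hnat : (age D0 sel j n + k + 1 <= age D0 sel j m)%nat) by lia.
    apply le_INR in Hnat. rewrite !plus_INR in Hnat. simpl in Hnat.
    pose proof (Hself j m Hm) as Hs. fold n in Hs.
    pose proof (recp_bound N pmin pmax p r0 sel Hp Hr j m Hm).
    pose proof (recp_bound N pmin pmax p r0 sel Hp Hr j n Hn).
    rewrite S_INR in Hk.
    assert (beta * (INR (age D0 sel j n) + INR k + 1) <= beta * INR (age D0 sel j m))
      by (apply Rmult_le_compat_l; lra).
    nra. }
  assert (Hnd : NoDup (m :: map sel (seq (t0 + k) N))).
  { constructor.
    - intros Hin. apply in_map_iff in Hin. destruct Hin as [u [Eu Hu]]. apply in_seq in Hu.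
      apply (Hns u); [unfold t0 in *; lia| exact Eu].
    - apply nodup_map_seq. intros i j ? ? ?. apply Hdist; lia. }
  assert (Hinc : incl (m :: map sel (seq (t0 + k) N)) (seq 0 N)).
  { intros x [<-|Hx]; apply in_seq; [lia|]. apply in_map_iff in Hx. destruct Hx as [u [<- _]].
    pose proof (Had u); lia. }
  pose proof (NoDup_incl_length Hnd Hinc). simpl in H. rewrite length_map, !length_seq in H. lia.
Qed.

Lemma rsum_nonneg f T : (forall t, 0 <= f t) -> 0 <= rsum f T.
Proof. intros H; induction T; simpl; [lra|]. specialize (H T); lra. Qed.

Lemma rsum_upper f M b : (forall t, (M <= t)%nat -> f t <= b) ->
  forall d, rsum f (M + d) <= rsum f M + INR d * b.
Proof.
  intros H d; induction d.
  - rewrite Nat.add_0_r; simpl; lra.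
  - replace (M + S d)%nat with (S (M + d)) by lia. simpl rsum. rewrite S_INR.
    specialize (H (M+d)%nat ltac:(lia)). lra.
Qed.

Lemma rsum_lower f M a : (forall t, (M <= t)%nat -> a <= f t) ->
  forall d, rsum f M + INR d * a <= rsum f (M + d).
Proof.
  intros H d; induction d.
  - rewrite Nat.add_0_r; simpl; lra.
  - replace (M + S d)%nat with (S (M + d)) by lia. simpl rsum. rewrite S_INR.
    specialize (H (M+d)%nat ltac:(lia)). lra.
Qed.

Lemma avg_upper f M b : 0 <= b -> (forall t, (M <= t)%nat -> f t <= b) ->
  forall eps, eps > 0 -> exists M', forall T, (T >= M')%nat -> rsum f T / INR T <= b + eps.
Proof.
  intros Hb H eps He.
  destruct (INR_archimed eps (Rabs (rsum f M)) He) as [n Hn].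
  exists (Nat.max (S M) n). intros T HT.
  assert (HTpos : 0 < INR T) by (apply lt_0_INR; lia).
  apply div_le; [exact HTpos|].
  pose proof (rsum_upper f M b H (T - M)) as H0.
  replace (M + (T - M))%nat with T in H0 by lia.
  assert (INR (T - M) <= INR T) by (apply le_INR; lia).
  assert (INR n <= INR T) by (apply le_INR; lia).
  assert (rsum f M <= Rabs (rsum f M)) by apply Rle_abs.
  assert (INR n * eps <= INR T * eps) by (apply Rmult_le_compat_r; lra).
  assert (INR (T - M) * b <= INR T * b) by (apply Rmult_le_compat_r; lra).
  nra.
Qed.

Lemma avg_lower f M a : 0 <= a -> (forall t, 0 <= f t) -> (forall t, (M <= t)%nat -> a <= f t) ->
  forall eps, eps > 0 -> exists M', forall T, (T >= M')%nat -> a - eps <= rsum f T / INR T.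
Proof.
  intros Ha H0 H eps He.
  destruct (INR_archimed eps (INR M * a) He) as [n Hn].
  exists (Nat.max (S M) n). intros T HT.
  assert (HTpos : 0 < INR T) by (apply lt_0_INR; lia).
  apply le_div; [exact HTpos|].
  pose proof (rsum_lower f M a H (T - M)).
  replace (M + (T - M))%nat with T in H1 by lia.
  pose proof (rsum_nonneg f M H0).
  assert (INR (T - M) = INR T - INR M) by (rewrite minus_INR; [lra|lia]).
  assert (INR n <= INR T) by (apply le_INR; lia).
  assert (INR n * eps <= INR T * eps) by (apply Rmult_le_compat_r; lra).
  nra.
Qed.

Lemma limsup_le u L b : is_limsup u L ->
  (forall eps, eps > 0 -> exists M, forall n, (n >= M)%nat -> u n <= b + eps) -> L <= b.
Proof.
  intros HL Hb. destruct (Rle_dec L b) as [|Hn]; [assumption|exfalso].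
  set (e := (L - b) / 3). assert (He : e > 0) by (unfold e; lra).
  destruct (Hb e He) as [M HM]. destruct (proj2 (HL e He) M) as [n [Hn1 Hn2]].
  specialize (HM n Hn1). unfold e in *. lra.
Qed.

Lemma limsup_ge u L a : is_limsup u L ->
  (forall eps, eps > 0 -> exists M, forall n, (n >= M)%nat -> a - eps <= u n) -> a <= L.
Proof.
  intros HL Ha. destruct (Rle_dec a L) as [|Hn]; [assumption|exfalso].
  set (e := (a - L) / 3). assert (He : e > 0) by (unfold e; lra).
  destruct (Ha e He) as [M HM]. destruct (proj1 (HL e He)) as [M2 HM2].
  specialize (HM (Nat.max M M2) ltac:(lia)). specialize (HM2 (Nat.max M M2) ltac:(lia)).
  unfold e in *. lra.
Qed.

Lemma limsup_of_lim u c :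
  (forall eps, eps > 0 -> exists M, forall n, (n >= M)%nat -> u n <= c + eps) ->
  (forall eps, eps > 0 -> exists M, forall n, (n >= M)%nat -> c - eps <= u n) ->
  is_limsup u c.
Proof.
  intros Hu Hl eps He. split; [apply Hu; exact He|].
  intros M. destruct (Hl eps He) as [M2 HM2]. exists (Nat.max M M2). split; [lia|].
  specialize (HM2 (Nat.max M M2) ltac:(lia)). lra.
Qed.

Lemma rr_window N a n : (1 <= N)%nat -> (n < N)%nat ->
  exists s, (a <= s < a + N)%nat /\ s mod N = n.
Proof.
  intros HN Hn. pose proof (Nat.div_mod_eq a N). pose proof (Nat.mod_upper_bound a N ltac:(lia)).
  destruct (Nat.le_gt_cases (a mod N) n).
  - exists (n + (a / N) * N)%nat. split; [lia|]. rewrite Nat.Div0.mod_add. apply Nat.mod_small; lia.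
  - exists (n + (a / N + 1) * N)%nat. split; [lia|]. rewrite Nat.Div0.mod_add. apply Nat.mod_small; lia.
Qed.

Lemma rr_max N D0 : (1 <= N)%nat -> forall t, (N <= t)%nat ->
  max_age N D0 (fun t => t mod N) t = (N - 1)%nat.
Proof.
  intros HN t Ht. apply Nat.le_antisymm.
  - apply max_age_le. intros n Hn. destruct (rr_window N (t - N) n HN Hn) as [s [Hs Es]].
    pose proof (age_after_select D0 (fun t => t mod N) n s t Es ltac:(lia)). lia.
  - apply lower_max_age; [|assumption|lia]. intros u; apply Nat.mod_upper_bound; lia.
Qed.

Lemma lower_limsup N D0 sel L : admissible N sel -> (1 <= N)%nat ->
  is_limsup (avg_max_age N D0 sel) L -> INR (N - 1) <= L.
Proof.
  intros Had HN HL. apply (limsup_ge _ _ _ HL). intros eps He.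
  apply (avg_lower _ (N-1)); [apply pos_INR| intros; apply pos_INR| |exact He].
  intros t Ht. apply le_INR. apply lower_max_age; assumption.
Qed.

Theorem theorem1 (N : nat) (pmin pmax beta : R)
  (p : nat -> nat -> R) (r0 : nat -> R) (D0 : nat -> nat) (sel : nat -> nat)
  (hN : (2 <= N)%nat) (hpmin : 0 < pmin) (hp : pmin <= pmax) (hbeta : 0 < beta)
  (hprice : forall t n, (n < N)%nat -> pmin <= p t n <= pmax)
  (hr0 : forall n, (n < N)%nat -> pmin <= r0 n <= pmax)
  (hsel : selfish N beta D0 r0 p sel) :
  (exists Lsel, is_limsup (avg_max_age N D0 sel) Lsel) /\
  (exists Lopt, is_inf (achievable N D0) Lopt) /\
  (forall Lsel Lopt,
     is_limsup (avg_max_age N D0 sel) Lsel ->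
     is_inf (achievable N D0) Lopt ->
     1 - Lopt / Lsel <= pmax / (INR (N - 1) * beta + pmax)).
Proof.
  destruct (floor_nat (pmax - pmin) beta hbeta ltac:(lra)) as [k [Hk1 Hk2]].
  assert (Had : admissible N sel) by (apply hsel).
  assert (HN1 : (1 <= N)%nat) by lia.
  assert (Hup : forall t, (N + k <= t)%nat -> INR (max_age N D0 sel t) <= INR (N - 1 + k)).
  { intros t Ht. apply le_INR. apply max_age_le. intros n Hn.
    exact (selfish_upper N pmin pmax beta p r0 D0 sel k hbeta hprice hr0 hsel Hk2 t n Ht Hn). }
  assert (Hev_up : forall eps, eps > 0 -> exists M, forall n, (n >= M)%nat ->
            avg_max_age N D0 sel n <= INR (N - 1 + k) + eps).
  { intros eps He. unfold avg_max_age. apply (avg_upper _ (N + k)); [apply pos_INR|exact Hup|exact He]. }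
  assert (Hev_lo : forall eps, eps > 0 -> exists M, forall n, (n >= M)%nat ->
            INR (N - 1) - eps <= avg_max_age N D0 sel n).
  { intros eps He. unfold avg_max_age. apply (avg_lower _ (N - 1)); [apply pos_INR| intros; apply pos_INR| |exact He].
    intros t Ht. apply le_INR. apply lower_max_age; assumption. }
  assert (Hlopt : forall L, achievable N D0 L -> INR (N - 1) <= L).
  { intros L [s [Hs HL]]. exact (lower_limsup N D0 s L Hs HN1 HL). }
  assert (Hrr : achievable N D0 (INR (N - 1))).
  { exists (fun t => t mod N). split; [intros u; apply Nat.mod_upper_bound; lia|].
    assert (Hc : forall t, (N <= t)%nat -> INR (max_age N D0 (fun t => t mod N) t) = INR (N - 1))
      by (intros t Ht; rewrite rr_max; auto).
    apply limsup_of_lim; intros eps He; unfold avg_max_age.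
    - apply (avg_upper _ N); [apply pos_INR| intros t Ht; rewrite Hc; [lra|auto] |exact He].
    - apply (avg_lower _ N); [apply pos_INR| intros; apply pos_INR| intros t Ht; rewrite Hc; [lra|auto] |exact He]. }
  split; [|split].
  - destruct (ex_LimSup_seq (avg_max_age N D0 sel)) as [l Hl]. destruct l as [r| |].
    + exists r. intros eps He. destruct (Hl (mkposreal eps He)) as [H1 H2]. simpl in H1, H2. split.
      * destruct H2 as [M HM]. exists M. intros n Hn. specialize (HM n Hn). lra.
      * intros M. destruct (H1 M) as [n [Hn1 Hn2]]. exists n. split; [lia|lra].
    + exfalso. destruct (Hev_up 1 ltac:(lra)) as [M HM].
      destruct (Hl (INR (N - 1 + k) + 1) M) as [n [Hn1 Hn2]]. specialize (HM n Hn1). lra.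
    + exfalso. destruct (Hev_lo 1 ltac:(lra)) as [M HM].
      destruct (Hl (INR (N - 1) - 1)) as [M2 HM2].
      specialize (HM (Nat.max M M2) ltac:(lia)). specialize (HM2 (Nat.max M M2) ltac:(lia)). lra.
  - exists (INR (N - 1)). split; [exact Hlopt|]. intros y Hy. apply Hy. exact Hrr.
  - intros Lsel Lopt HLs HLo.
    assert (Hc1 : 1 <= INR (N - 1)) by (replace 1 with (INR 1) by reflexivity; apply le_INR; lia).
    assert (HLsl : INR (N - 1) <= Lsel) by (apply Hlopt; exists sel; split; assumption).
    assert (HLoc : INR (N - 1) <= Lopt) by (apply (proj2 HLo); exact Hlopt).
    assert (HLsu : Lsel <= INR (N - 1 + k)) by (apply (limsup_le _ _ _ HLs); exact Hev_up).
    rewrite plus_INR in HLsu.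
    set (c := INR (N - 1)) in *.
    set (q := Lopt / Lsel).
    assert (Hq : q * Lsel = Lopt) by (unfold q; field; lra).
    assert (Hq0 : 0 <= q) by (unfold q; apply Rdiv_le_0_compat; lra).
    assert (HbL : beta * Lsel <= beta * c + pmax).
    { assert (beta * Lsel <= beta * (c + INR k)) by (apply Rmult_le_compat_l; lra). lra. }
    apply le_div; [nra|].
    assert (q * (beta * Lsel) <= q * (c * beta + pmax)) by (apply Rmult_le_compat_l; lra).
    nra.
Qed.
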